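(* The set $\mathcal C=\{G\in\mathcal G:\ \overline G\text{ is algebraically closed}\}$ is comeager in $\mathcal G$.
   Context: Let $\mathbb N=\{1,2,3,\dots\}$. Equip $\mathbb N^{\mathbb N\times\mathbb N}$ with the product topology of the discrete topology on $\mathbb N$. Let $\mathcal G$ be the subspace consisting of those $A\in\mathbb N^{\mathbb N\times\mathbb N}$ that are the multiplication table of a group on the underlying set $\mathbb N$ whose identity element is $1$. For $G\in\mathcal G$, $\overline G$ denotes the group on $\mathbb N$ with multiplication table $G$. Algebraic closedness: let $F$ be the free group on $X=\{x_1,x_2,\dots\}$ and $K$ a group. A finite system $(E,I)$ consists of finite sets $E,I\subseteq F\star K$ (equations and inequations). A solution of $(E,I)$ in $K$ is a homomorphism $f:F\to K$ such that the homomorphism $\tilde f:F\star K\to K$ extending $f$ and the identity of $K$ maps every element of $E$ to $1$ and no element of $I$ to $1$. The system is consistent with $K$ if there is a group $L$ and an embedding $h:K\to L$ such that the image of $(E,I)$ under the homomorphism $F\star K\to F\star L$ extending $h$ and $\mathrm{id}_F$ has a solution in $L$. $K$ is algebraically closed if every finite system $(E,I)$ consistent with $K$ has a solution in $K$. *)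

(* Defs.v *)
From Stdlib Require Import List.
Import ListNotations.

Definition IsGroup (T : Type) (mul : T -> T -> T) (one : T) (inv : T -> T) : Prop :=
  (forall a b c, mul a (mul b c) = mul (mul a b) c) /\
  (forall a, mul one a = a) /\ (forall a, mul a one = a) /\
  (forall a, mul a (inv a) = one) /\ (forall a, mul (inv a) a = one).

(** * Elements of the free product F * K, F free on X = {x_0, x_1, ...}.
    Every element of F * K is the product of a finite word whose letters are
    generators x_i, their inverses, or constants from K. *)
Inductive letter (K : Type) : Type :=
| Var : nat -> bool -> letter K   (* Var i true = x_i, Var i false = x_i^-1 *)
| Cst : K -> letter K.
Arguments Var {K} _ _.
Arguments Cst {K} _.

Definition word (K : Type) := list (letter K).

(** This is the image of the word under
    the homomorphism F * K -> L extending g on F and c on K. *)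
Definition eval_word {K L : Type} (mulL : L -> L -> L) (oneL : L) (invL : L -> L)
  (g : nat -> L) (c : K -> L) (w : word K) : L :=
  fold_right (fun l acc =>
     mulL (match l with
           | Var i true => g i
           | Var i false => invL (g i)
           | Cst k => c k end) acc) oneL w.

Definition solves {K L : Type} (mulL : L -> L -> L) (oneL : L) (invL : L -> L)
  (c : K -> L) (E I : list (word K)) (g : nat -> L) : Prop :=
  (forall e, In e E -> eval_word mulL oneL invL g c e = oneL) /\
  (forall i, In i I -> eval_word mulL oneL invL g c i <> oneL).

Definition consistent {K : Type} (mulK : K -> K -> K) (E I : list (word K)) : Prop :=
  exists (L : Type) (mulL : L -> L -> L) (oneL : L) (invL : L -> L) (h : K -> L),
    IsGroup L mulL oneL invL /\
    (forall a b, h (mulK a b) = mulL (h a) (h b)) /\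
    (forall a b, h a = h b -> a = b) /\
    exists g : nat -> L, solves mulL oneL invL h E I g.

Definition algebraically_closed {K : Type} (mulK : K -> K -> K) (oneK : K) (invK : K -> K)
  : Prop :=
  forall E I : list (word K), consistent mulK E I ->
    exists g : nat -> K, solves mulK oneK invK (fun k => k) E I g.

(** * The space of group tables.
    READING: the underlying set N = {1,2,...} is relabelled as nat via
    n |-> n - 1; thus the identity 1 becomes 0 and a table is nat -> nat -> nat. *)
Definition table := nat -> nat -> nat.

Definition in_G (A : table) : Prop := exists inv : nat -> nat, IsGroup nat A 0 inv.

Definition in_C (A : table) : Prop :=
  exists inv : nat -> nat, IsGroup nat A 0 inv /\ algebraically_closed A 0 inv.

(** Basic neighbourhoods of the product topology: agreement on [0,n)x[0,n). *)
Definition agree (n : nat) (A B : table) : Prop :=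
  forall i j, i < n -> j < n -> A i j = B i j.

Definition openG (U : table -> Prop) : Prop :=
  (forall A, U A -> in_G A) /\
  (forall A, U A -> exists n, forall B, in_G B -> agree n A B -> U B).

Definition denseG (U : table -> Prop) : Prop :=
  forall A n, in_G A -> exists B, in_G B /\ agree n A B /\ U B.

Definition comeagerG (S : table -> Prop) : Prop :=
  exists D : nat -> table -> Prop,
    (forall k, openG (D k) /\ denseG (D k)) /\
    (forall A, in_G A -> (forall k, D k A) -> S A).

(* Main.v *)
Require Import Defs.
From Stdlib Require Import List Lia.
From Stdlib Require Import Classical FunctionalExtensionality IndefiniteDescription.
From HB Require Import structures.
From mathcomp Require Import all_boot zify.
From mathcomp Require Import boolp classical_sets cardinality.

Set Warnings "-notation-overridden -redundant-canonical-projection".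

Section Enum.
Local Open Scope classical_set_scope.
Lemma enum_inf (T : Type) (X : set T) (e : nat -> T) (j : nat -> T) :
  X `<=` range e -> injective j -> (forall n, X (j n)) ->
  exists psi : nat -> T, injective psi /\ (forall n, X (psi n)) /\
    (forall x, X x -> exists n, psi n = x).
Proof.
move=> Xe jinj jX.
have cX : countable X.
  apply: (card_le_trans (subset_card_le Xe)).
  exact: card_image_le.
have iX : infinite_set X.
  apply/infiniteP.
  apply: (@card_le_trans _ _ _ (j @` setT)).
    rewrite (card_le_eqr (inj_card_eq _)); [exact: card_lexx | move=> a b _ _; apply: jinj].
  by apply: subset_card_le => _ [n _ <-].
have /card_esym/card_bijP[f bf] := eq_card_nat cX iX.
exists (fun n => val (f (@exist _ _ n (mem_set I)))).
split; [|split].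
- move=> a b /= /val_inj/(bij_inj bf) [].
  done.
- by move=> n; have := valP (f (exist _ n (mem_set I))); rewrite inE.
- move=> x Xx.
  have [g fg gf] := bf.
  set y : X := exist _ x (mem_set Xx).
  exists (val (g y)).
  have -> : exist _ (val (g y)) (mem_set I) = g y.
    by apply: val_inj.
  by rewrite gf.
Qed.
End Enum.

Definition lcode (l : letter nat) : (nat * bool) + nat :=
  match l with Var i b => inl (i, b) | Cst k => inr k end.
Definition ldecode (c : (nat * bool) + nat) : letter nat :=
  match c with inl (i, b) => Var i b | inr k => Cst k end.
Lemma lcodeK : cancel lcode ldecode. Proof. by case=> [i []|k]. Qed.
HB.instance Definition _ := Countable.copy (letter nat) (can_type lcodeK).

Definition sys := (seq (word nat) * seq (word nat))%type.

Section Grp.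
Variables (T : Type) (mul : T -> T -> T) (one : T) (inv : T -> T).
Hypothesis G : IsGroup T mul one inv.

Lemma g_cancel a b c : mul a b = mul a c -> b = c.
Proof.
case: G => [ass [l1 [r1 [rv lv]]]] H.
by rewrite -(l1 b) -(l1 c) -(lv a) -!ass H.
Qed.

Lemma g_inv_uniq a b : mul a b = one -> b = inv a.
Proof. by case: G => [_ [_ [_ [rv _]]]] H; apply: (g_cancel a); rewrite H rv. Qed.

Lemma g_inv_mul a b : inv (mul a b) = mul (inv b) (inv a).
Proof.
case: G => [ass [l1 [r1 [rv lv]]]].
symmetry; apply: g_inv_uniq.
by rewrite -ass (ass b) rv l1 rv.
Qed.

Lemma g_inv_inv a : inv (inv a) = a.
Proof. case: G => [_ [_ [_ [_ lv]]]]; symmetry; exact: g_inv_uniq. Qed.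

Lemma g_idem a : mul a a = a -> a = one.
Proof. case: G => [_ [_ [r1 _]]] H; apply: (g_cancel a); by rewrite H r1. Qed.
End Grp.
Arguments g_cancel {T mul one inv}.
Arguments g_inv_uniq {T mul one inv}.
Arguments g_inv_mul {T mul one inv}.
Arguments g_inv_inv {T mul one inv}.
Arguments g_idem {T mul one inv}.

Lemma eval_cons {K L} mulL (oneL : L) invL g (c : K -> L) l w :
  eval_word mulL oneL invL g c (l :: w) =
  mulL (match l with Var i true => g i | Var i false => invL (g i) | Cst k => c k end)
       (eval_word mulL oneL invL g c w).
Proof. by []. Qed.

Lemma agree_mono n m A B : (m <= n)%coq_nat -> agree n A B -> agree m A B.
Proof. move=> le H i j hi hj; apply: H; lia. Qed.

Lemma agree_refl n A : agree n A A. Proof. by []. Qed.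

Lemma agree_trans n A B C : agree n A B -> agree n B C -> agree n A C.
Proof. by move=> H1 H2 i j hi hj; rewrite H1 // H2. Qed.

Lemma inv_agree A iA B iB n a : IsGroup nat A 0 iA -> IsGroup nat B 0 iB ->
  agree n A B -> (a < n)%coq_nat -> (iA a < n)%coq_nat -> iB a = iA a.
Proof.
move=> GA GB H ha hi; symmetry; apply: (g_inv_uniq GB).
rewrite -H //; by case: GA => [_ [_ [_ [rv _]]]].
Qed.

Lemma eval_open A iA g w : IsGroup nat A 0 iA -> exists n, forall B iB,
  IsGroup nat B 0 iB -> agree n A B ->
  eval_word B 0 iB g (fun k => k) w = eval_word A 0 iA g (fun k => k) w.
Proof.
move=> GA; elim: w => [|l w [n0 IH]]; first by exists 0.
set a := eval_word A 0 iA g (fun k => k) w.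
case: l => [i [] | k].
- exists (PeanoNat.Nat.max n0 (S (g i + a))) => B iB GB H.
  rewrite !eval_cons IH //; last by apply: (agree_mono _ _ _ _ _ H); lia.
  rewrite -/a H //; lia.
- exists (PeanoNat.Nat.max n0 (S (g i + iA (g i) + a))) => B iB GB H.
  rewrite !eval_cons IH //; last by apply: (agree_mono _ _ _ _ _ H); lia.
  rewrite -/a (inv_agree _ _ _ _ _ _ GA GB H); try lia.
  rewrite H //; lia.
- exists (PeanoNat.Nat.max n0 (S (k + a))) => B iB GB H.
  rewrite !eval_cons IH //; last by apply: (agree_mono _ _ _ _ _ H); lia.
  rewrite -/a H //; lia.
Qed.

Lemma evals_open A iA g (ws : list (word nat)) : IsGroup nat A 0 iA -> exists n, forall B iB,
  IsGroup nat B 0 iB -> agree n A B -> forall w, List.In w ws ->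
  eval_word B 0 iB g (fun k => k) w = eval_word A 0 iA g (fun k => k) w.
Proof.
move=> GA; elim: ws => [|w ws [n0 IH]]; first by exists 0.
have [n1 H1] := eval_open A iA g w GA.
exists (PeanoNat.Nat.max n0 n1) => B iB GB H v [<-|hv].
- apply: H1 => //; apply: (agree_mono _ _ _ _ _ H); lia.
- apply: IH => //; apply: (agree_mono _ _ _ _ _ H); lia.
Qed.

Definition HasSol (s : sys) (A : table) : Prop :=
  exists iA, IsGroup nat A 0 iA /\ exists g, solves A 0 iA (fun k => k) s.1 s.2 g.

Lemma HasSol_inG s A : HasSol s A -> in_G A.
Proof. by case=> iA [GA _]; exists iA. Qed.

Lemma HasSol_open s A : HasSol s A -> exists n, forall B, in_G B -> agree n A B -> HasSol s B.
Proof.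
case=> iA [GA [g [solE solI]]].
have [n H] := evals_open A iA g (app s.1 s.2) GA.
exists n => B [iB GB] hAB; exists iB; split => //; exists g; split.
- move=> e he; rewrite (H B iB GB hAB e); first exact: solE.
  by apply: in_or_app; left.
- move=> i hi; rewrite (H B iB GB hAB i); first exact: solI.
  by apply: in_or_app; right.
Qed.

Definition Dsys (s : sys) (A : table) : Prop :=
  HasSol s A \/ (in_G A /\ exists n, forall B, in_G B -> agree n A B -> ~ HasSol s B).

Lemma Dsys_open s : openG (Dsys s).
Proof.
split.
- by move=> A [/HasSol_inG|[]].
- move=> A [/HasSol_open [n H]|[_ [n H]]].
  + by exists n => B GB hAB; left; apply: H.
  + exists n => B GB hAB; right; split => // ; exists n => C GC hBC.
    apply: H => //; exact: agree_trans hAB hBC.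
Qed.

Lemma Dsys_dense s : denseG (Dsys s).
Proof.
move=> A n GA.
case: (Classical_Prop.classic (exists B, in_G B /\ agree n A B /\ HasSol s B)).
- by case=> B [GB [h1 h2]]; exists B; split; [|split] => //; left.
- move=> nH; exists A; split; [|split] => //; right; split => //.
  exists n => B GB hAB hs; apply: nH; by exists B.
Qed.

Lemma inG_open : openG in_G.
Proof. by split => // A _; exists 0. Qed.

Lemma inG_dense : denseG in_G.
Proof. by move=> A n GA; exists A. Qed.

Definition Dk (k : nat) : table -> Prop :=
  match @unpickle sys k with Some s => Dsys s | None => in_G end.

Section Transport.
Variables (L : Type) (mulL : L -> L -> L) (oneL : L) (invL : L -> L).
Hypothesis GL : IsGroup L mulL oneL invL.
Variables (M : L -> Prop) (th : nat -> L) (ph : L -> nat).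
Hypotheses (th_inj : forall a b, th a = th b -> a = b) (thM : forall m, M (th m))
  (phK : forall x, M x -> th (ph x) = x)
  (Mmul : forall x y, M x -> M y -> M (mulL x y)) (Minv : forall x, M x -> M (invL x))
  (th0 : th 0 = oneL).

Definition Bt : table := fun a b => ph (mulL (th a) (th b)).
Definition iBt : nat -> nat := fun a => ph (invL (th a)).

Lemma thB a b : th (Bt a b) = mulL (th a) (th b).
Proof. by rewrite /Bt phK //; apply: Mmul. Qed.
Lemma thiB a : th (iBt a) = invL (th a).
Proof. by rewrite /iBt phK //; apply: Minv. Qed.

Lemma Bt_group : IsGroup nat Bt 0 iBt.
Proof.
case: GL => [ass [l1 [r1 [rv lv]]]].
split; [|split; [|split; [|split]]] => *; apply: th_inj;
  rewrite ?thB ?thiB ?thB ?th0 //;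
  first [by rewrite ass | by rewrite l1 | by rewrite r1 | by rewrite rv | by rewrite lv].
Qed.

Lemma th_eval (c : nat -> L) g w :
  (forall k, List.In (Cst k) w -> th k = c k) -> (forall i, M (g i)) ->
  th (eval_word Bt 0 iBt (fun i => ph (g i)) (fun k => k) w) =
  eval_word mulL oneL invL g c w.
Proof.
move=> hc hg; elim: w hc => [|l w IH] hc /=; first exact: th0.
rewrite thB IH; last by move=> k hk; apply: hc; right.
case: l hc => [i [] | k] hc.
- by rewrite phK.
- by rewrite thiB phK.
- by rewrite hc //; left.
Qed.
End Transport.

Lemma bnd1 (f : nat -> nat) m : exists c, forall i, (i < m)%coq_nat -> (f i < c)%coq_nat.
Proof.
elim: m => [|m [c H]]; first by exists 0 => i hi; lia.
exists (PeanoNat.Nat.max c (S (f m))) => i hi.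
case: (PeanoNat.Nat.eq_dec i m) => [->|ne]; first lia.
have := H i ltac:(lia); lia.
Qed.

Lemma bnd2 (A : table) m : exists c, forall i j, (i < m)%coq_nat -> (j < m)%coq_nat -> (A i j < c)%coq_nat.
Proof.
elim: m => [|m [c H]]; first by exists 0 => i j hi; lia.
have [c1 H1] := bnd1 (fun j => A m j) m.+1.
have [c2 H2] := bnd1 (fun j => A j m) m.+1.
exists (PeanoNat.Nat.max c (PeanoNat.Nat.max c1 c2)) => i j hi hj.
case: (PeanoNat.Nat.eq_dec i m) => [->|ne]; first by have := H1 j hj; lia.
case: (PeanoNat.Nat.eq_dec j m) => [->|ne']; first by have := H2 i hi; lia.
have := H i j ltac:(lia) ltac:(lia); lia.
Qed.

Lemma cst_bnd1 (w : word nat) : exists c, forall k, List.In (Cst k) w -> (k < c)%coq_nat.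
Proof.
elim: w => [|l w [c H]]; first by exists 0.
case: l => [i b|k].
- exists c => k [//|]; exact: H.
- exists (PeanoNat.Nat.max c (S k)) => k' [[<-]|hk]; first lia.
  have := H k' hk; lia.
Qed.

Lemma cst_bnd (ws : list (word nat)) : exists c, forall w k, List.In w ws -> List.In (Cst k) w -> (k < c)%coq_nat.
Proof.
elim: ws => [|w ws [c H]]; first by exists 0.
have [c1 H1] := cst_bnd1 w.
exists (PeanoNat.Nat.max c c1) => v k [<-|hv] hk.
- have := H1 k hk; lia.
- have := H v k hv hk; lia.
Qed.

Section Ext.
Variables (A : table) (iA : nat -> nat) (E I : list (word nat)) (n : nat).
Hypothesis GA : IsGroup nat A 0 iA.
Variables (L : Type) (mulL : L -> L -> L) (oneL : L) (invL : L -> L) (h : nat -> L) (g : nat -> L).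
Hypotheses (GL : IsGroup L mulL oneL invL) (hM : forall a b, h (A a b) = mulL (h a) (h b))
  (hI : forall a b, h a = h b -> a = b) (sol : solves mulL oneL invL h E I g).

Let ev w := eval_word mulL oneL invL g h w.

Lemma h0 : h 0 = oneL.
Proof.
apply: (g_idem GL); rewrite -hM.
by case: GA => [_ [l1 _]]; rewrite l1.
Qed.

Lemma hinv k : h (iA k) = invL (h k).
Proof.
apply: (g_inv_uniq GL); rewrite -hM -h0.
by case: GA => [_ [_ [_ [rv _]]]]; rewrite rv.
Qed.

Lemma ev_cat w1 w2 : ev (w1 ++ w2) = mulL (ev w1) (ev w2).
Proof.
case: GL => [ass [l1 _]].
elim: w1 => [|l w1 IH] /=; first by rewrite /ev /= l1.
by rewrite /ev /= -/(ev _) IH ass.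
Qed.

Definition Mg x := (exists w, x = ev w) /\ (exists w, invL x = ev w).

Lemma Mg_mul x y : Mg x -> Mg y -> Mg (mulL x y).
Proof.
move=> [[w1 e1] [v1 f1]] [[w2 e2] [v2 f2]]; split.
- by exists (w1 ++ w2); rewrite ev_cat e1 e2.
- by exists (v2 ++ v1); rewrite ev_cat (g_inv_mul GL) f1 f2.
Qed.

Lemma Mg_inv x : Mg x -> Mg (invL x).
Proof. by move=> [[w1 e1] [v1 f1]]; split; [exists v1|exists w1; rewrite (g_inv_inv GL)]. Qed.

Lemma ev1 l : ev [:: l] = match l with Var i true => g i | Var i false => invL (g i) | Cst k => h k end.
Proof. case: GL => [_ [_ [r1 _]]]; rewrite /ev /= r1; by case: l => [i []|]. Qed.

Lemma Mg_h k : Mg (h k).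
Proof. split; [exists [:: Cst k]|exists [:: Cst (iA k)]]; by rewrite ev1 ?hinv. Qed.

Lemma Mg_g i : Mg (g i).
Proof. split; [exists [:: Var i true]|exists [:: Var i false]]; by rewrite ev1. Qed.

Lemma extend_aux : exists B, in_G B /\ agree n A B /\ HasSol (E, I) B.
Proof.
have [c1 Hc1] := bnd2 A n.
have [c2 Hc2] := cst_bnd (app E I).
set N := S (n + c1 + c2).
pose X x := Mg x /\ forall k, (k < N)%coq_nat -> x <> h k.
pose e m := match @unpickle (word nat) m with Some w => ev w | None => oneL end.
have [psi [psi_inj [psiX psi_surj]]] :
  exists psi : nat -> L, injective psi /\ (forall m, X (psi m)) /\
    (forall x, X x -> exists m, psi m = x).
  apply: (@enum_inf L X e (fun m => h (m + N))).
  - move=> x [[[w ->] _] _]; exists (pickle w) => //; by rewrite /e pickleK.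
  - move=> a b /hI; lia.
  - move=> m; split; first exact: Mg_h.
    move=> k hk /hI; lia.
pose th m := if (m < N)%N then h m else psi (m - N).
have th_low m : (m < N)%coq_nat -> th m = h m.
  by move=> hm; rewrite /th; case: ltnP => //; lia.
have th_inj : forall a b, th a = th b -> a = b.
  move=> a b; rewrite /th; case: ltnP => ha; case: ltnP => hb.
  - by move/hI.
  - move=> E1; have [_ H] := psiX (b - N); case: (H a); [lia|by rewrite -E1].
  - move=> E1; have [_ H] := psiX (a - N); case: (H b); [lia|by rewrite E1].
  - move/psi_inj; lia.
have thM m : Mg (th m).
  by rewrite /th; case: ltnP => _; [apply: Mg_h|case: (psiX (m - N))].
have th_surj x : Mg x -> exists m, th m = x.
  move=> Mx; case: (Classical_Prop.classic (exists k, (k < N)%coq_nat /\ x = h k)).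
  - by case=> k [hk ->]; exists k; apply: th_low.
  - move=> nk; have [m hm] : exists m, psi m = x.
      apply: psi_surj; split => // k hk ex; apply: nk; by exists k.
    exists (m + N); rewrite /th; case: ltnP; first lia.
    by rewrite addnK.
have [ph phK] : exists ph : L -> nat, forall x, Mg x -> th (ph x) = x.
  apply: (functional_choice (fun x m => Mg x -> th m = x)) => x.
  case: (Classical_Prop.classic (Mg x)) => [/th_surj [m hm]|nM]; first by exists m.
  by exists 0.
have th0 : th 0 = oneL by rewrite th_low ?h0 //; lia.
pose B := Bt L mulL th ph.
pose iB := iBt L invL th ph.
have GB : IsGroup nat B 0 iB := Bt_group L mulL oneL invL GL Mg th ph th_inj thM phK Mg_mul Mg_inv th0.
exists B; split; first by exists iB.
split.
- move=> i j hi hj; apply: th_inj.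
  rewrite /B (thB L mulL Mg th ph thM phK Mg_mul) !th_low ?hM //; try lia.
  by have := Hc1 i j hi hj; lia.
- exists iB; split => //; exists (fun i => ph (g i)).
  have key w : List.In w (app E I) ->
      th (eval_word B 0 iB (fun i => ph (g i)) (fun k => k) w) = ev w.
    move=> hw; apply: (th_eval L mulL oneL invL Mg th ph thM phK Mg_mul Mg_inv th0).
    + move=> k hk; apply: th_low; have := Hc2 w k hw hk; lia.
    + exact: Mg_g.
  case: sol => solE solI; split => /=.
  + move=> w hw; apply: th_inj; rewrite key ?th0; last by apply: in_or_app; left.
    exact: solE.
  + move=> w hw ex; apply: (solI w hw).
    by rewrite -/(ev w) -key ?ex ?th0 //; apply: in_or_app; right.
Qed.
End Ext.

Lemma extend (A : table) iA E I n : IsGroup nat A 0 iA -> consistent A E I ->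
  exists B, in_G B /\ agree n A B /\ HasSol (E, I) B.
Proof.
move=> GA [L [mulL [oneL [invL [h [GL [hM [hI [g sol]]]]]]]]].
exact: (extend_aux A iA E I n GA L mulL oneL invL h g GL hM hI sol).
Qed.

Theorem theorem6p1 : comeagerG in_C.
Proof.
exists Dk; split.
- move=> k; rewrite /Dk; case: (unpickle k) => [s|].
  + by split; [apply: Dsys_open|apply: Dsys_dense].
  + by split; [apply: inG_open|apply: inG_dense].
- move=> A [iA GA] DA; exists iA; split => // E I cons.
  have := DA (pickle ((E, I) : sys)); rewrite /Dk pickleK.
  case=> [[iB [GB [g sl]]]|[_ [n H]]].
  + have eqi : iB = iA.
      apply: functional_extensionality => a; apply: (g_inv_uniq GA).
      by case: GB => [_ [_ [_ [rv _]]]]; rewrite rv.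
    by subst; exists g.
  + have [B [GB [hAB hs]]] := extend A iA E I n GA cons.
    by case: (H B GB hAB hs).
Qed.
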